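(* Let $(G,v)$ be a Hamel space over an ordered field $C$, let $P\subseteq G$ be a downward closed subset of $(G,<_0)$, and let $(b_\rho)$ be a divergent pc-sequence in $G$. Then there are an extension $(G',v')$ of $(G,v)$ and an element $h\in G'$ such that (1) $b_\rho\leadsto h$ (in $(G',v')$); (2) $P<_0h<_0G\setminus P$; and (3) for any embedding of Hamel spaces $i:(G,v)\to(G^*,v^* )$ and any $h^*\in G^*$ with $i(b_\rho)\leadsto h^*$ and $i(P)<_0h^*<_0i(G\setminus P)$, there is an extension of $i$ to an embedding $(G',v')\to(G^*,v^* )$ sending $h$ to $h^*$.
   Context: Let $C$ be an ordered field. A $2$-ordered $C$-vector space is a $C$-vector space $G$ with two total orderings $<_0,<_1$ such that $G$ is an ordered $C$-vector space with respect to each. Put $G_\infty=G\cup\{\infty\}$, with $G<_0\infty$, $G<_1\infty$. A Hamel valuation on $G$ is a map $v:G\to G_\infty$ such that for all $x,y\in G$ and $\lambda\in C^{\times}$: $v(x)=\infty$ iff $x=0$; $v(x+y)\ge_0\min_0(v(x),v(y))$; $v(\lambda x)=v(x)$; if $0<_1x<_1y$ then $v(x)\ge_0v(y)$; $v(v(x))=v(x)$ (with $v(\infty)=\infty$); and $v(x)>_10$. A Hamel space is such a pair $(G,v)$. $(G',v')$ is an extension of $(G,v)$ if $G$ is a $C$-subspace of $G'$, both orderings on $G$ are restrictions of those on $G'$, and $v'|_G=v$. An embedding $i:(G,v)\to(G',v')$ is an injective $C$-linear map preserving $<_0$ and $<_1$ with $i(v(x))=v'(i(x))$. A well-indexed sequence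 is a sequence $(b_\rho)$ indexed by an infinite well-ordered set without a greatest element. It is a pc-sequence (pseudo-Cauchy, with respect to $v$ and the ordering $<_0$ on values) if there is an index $\rho_0$ such that for all $\tau>\sigma>\rho>\rho_0$, $v(b_\tau-b_\sigma)>_0v(b_\sigma-b_\rho)$. For an element $a$, $b_\rho\leadsto a$ ($a$ is a pseudolimit) means $(v(a-b_\rho))$ is eventually strictly $<_0$-increasing. The pc-sequence is divergent in $G$ if it has no pseudolimit in $G$. *)

(* Defs.v *)
From HB Require Import structures.
From mathcomp Require Import all_boot all_order all_algebra.
Set Implicit Arguments. Unset Strict Implicit. Unset Printing Implicit Defensive.
Import Order.TTheory GRing.Theory Num.Theory.
Local Open Scope ring_scope.

Section Defs.
Variable C : realFieldType.

Definition ordered_vs_order (G : lmodType C) (lt : G -> G -> Prop) : Prop :=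
  [/\ (forall x, ~ lt x x),
      (forall x y z, lt x y -> lt y z -> lt x z),
      (forall x y, lt x y \/ x = y \/ lt y x),
      (forall x y z, lt x y -> lt (x + z) (y + z)) &
      (forall (c : C) x, 0 < c -> lt 0 x -> lt 0 (c *: x))].

(* G_infty = option G, with None = infinity, the top element *)
Definition ltinf (G : Type) (lt : G -> G -> Prop) (a b : option G) : Prop :=
  match a, b with
  | Some x, Some y => lt x y
  | Some _, None => True
  | None, _ => False
  end.

Definition leinf (G : Type) (lt : G -> G -> Prop) (a b : option G) : Prop :=
  ltinf lt a b \/ a = b.

Definition vinf (G : Type) (v : G -> option G) (a : option G) : option G :=
  match a with Some x => v x | None => None end.

Record hamel := Hamel {
  hcar : lmodType C;
  hlt0 : hcar -> hcar -> Prop;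
  hlt1 : hcar -> hcar -> Prop;
  hv : hcar -> option hcar;
  hlt0_ovs : ordered_vs_order hlt0;
  hlt1_ovs : ordered_vs_order hlt1;
  hv_inf : forall x, hv x = None <-> x = 0;
  hv_add : forall x y, leinf hlt0 (hv x) (hv (x + y)) \/ leinf hlt0 (hv y) (hv (x + y));
  hv_scale : forall (l : C) x, l != 0 -> hv (l *: x) = hv x;
  hv_mono : forall x y, hlt1 0 x -> hlt1 x y -> leinf hlt0 (hv y) (hv x);
  hv_idem : forall x, vinf hv (hv x) = hv x;
  hv_pos : forall x, ltinf hlt1 (Some 0) (hv x)
}.

Definition hamel_embedding (H K : hamel) (f : hcar H -> hcar K) : Prop :=
  [/\ (forall (a : C) x y, f (a *: x + y) = a *: f x + f y),
      injective f,
      (forall x y, hlt0 x y -> hlt0 (f x) (f y)),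
      (forall x y, hlt1 x y -> hlt1 (f x) (f y)) &
      (forall x, omap f (hv x) = hv (f x))].

(* well-indexed: infinite well-ordered index set without greatest element
   (nonempty + no greatest element; infiniteness follows) *)
Definition well_indexed (I : Type) (ltI : I -> I -> Prop) : Prop :=
  (forall i, ~ ltI i i) /\
  (forall i j k, ltI i j -> ltI j k -> ltI i k) /\
  (forall i j, ltI i j \/ i = j \/ ltI j i) /\
  well_founded ltI /\
  inhabited I /\
  (forall i, exists j, ltI i j).

Definition pc_seq (H : hamel) (I : Type) (ltI : I -> I -> Prop) (b : I -> hcar H) : Prop :=
  exists r0, forall t s r, ltI r0 r -> ltI r s -> ltI s t ->
    ltinf (@hlt0 H) (hv (b s - b r)) (hv (b t - b s)).

Definition pseudolim (H : hamel) (I : Type) (ltI : I -> I -> Prop) (b : I -> hcar H)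
  (a : hcar H) : Prop :=
  exists r0, forall r s, ltI r0 r -> ltI r s ->
    ltinf (@hlt0 H) (hv (a - b r)) (hv (a - b s)).

Definition divergent (H : hamel) (I : Type) (ltI : I -> I -> Prop) (b : I -> hcar H) : Prop :=
  forall a : hcar H, ~ pseudolim ltI b a.

End Defs.

(* Main.v *)
Require Import Defs.
From HB Require Import structures.
From mathcomp Require Import all_boot all_order all_algebra.
From Stdlib Require Import Classical ClassicalEpsilon.
Set Implicit Arguments. Unset Strict Implicit. Unset Printing Implicit Defensive.
Import Order.TTheory GRing.Theory Num.Theory.
Local Open Scope ring_scope.

Section OVS.
Variable C : realFieldType.
Variable V : lmodType C.
Variable lt : V -> V -> Prop.
Hypothesis H : ordered_vs_order lt.
Definition le x y := lt x y \/ x = y.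

Lemma o_irr x : ~ lt x x. Proof. by case: H. Qed.
Lemma o_trans x y z : lt x y -> lt y z -> lt x z. Proof. case: H => _ t _ _ _; exact: t. Qed.
Lemma o_total x y : lt x y \/ x = y \/ lt y x. Proof. by case: H. Qed.
Lemma o_addr x y z : lt x y -> lt (x + z) (y + z). Proof. case: H => _ _ _ t _; exact: t. Qed.
Lemma o_scale0 (c : C) x : 0 < c -> lt 0 x -> lt 0 (c *: x). Proof. case: H => _ _ _ _ t; exact: t. Qed.
Lemma o_asym x y : lt x y -> ~ lt y x.
Proof. by move=> a b; apply: (o_irr (o_trans a b)). Qed.
Lemma o_addl x y z : lt x y -> lt (z + x) (z + y).
Proof. by move=> h; rewrite ![z + _]addrC; apply: o_addr. Qed.
Lemma o_sub0 x y : lt x y <-> lt 0 (y - x).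
Proof.
split=> h. by have := o_addr (- x) h; rewrite subrr.
by have := o_addr x h; rewrite add0r subrK.
Qed.
Lemma o_add0 a c : lt 0 a -> lt 0 c -> lt 0 (a + c).
Proof. move=> ha hc; apply: (o_trans hc); have := o_addr c ha; by rewrite add0r. Qed.
Lemma o_le_lt0 a c : le 0 a -> lt 0 c -> lt 0 (a + c).
Proof. case=> [ha|<-] hc; first exact: o_add0. by rewrite add0r. Qed.
Lemma o_le_add0 a c : le 0 a -> le 0 c -> le 0 (a + c).
Proof. case=> [ha|<-] hc; last by rewrite add0r. left; rewrite addrC; apply: o_le_lt0 => //. Qed.
Lemma o_opp x y : lt x y -> lt (- y) (- x).
Proof. move=> /o_sub0 h; apply/o_sub0; by rewrite opprK addrC. Qed.
Lemma o_opp0 x : lt 0 x -> lt (- x) 0.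
Proof. by move=> h; have := o_opp h; rewrite oppr0. Qed.
Lemma o_opp0' x : lt x 0 -> lt 0 (- x).
Proof. by move=> h; have := o_opp h; rewrite oppr0. Qed.
Lemma o_scale (c : C) x y : 0 < c -> lt x y -> lt (c *: x) (c *: y).
Proof. move=> hc /o_sub0 h; apply/o_sub0; rewrite -scalerBr; exact: o_scale0. Qed.
Lemma o_scaleN (c : C) x y : c < 0 -> lt x y -> lt (c *: y) (c *: x).
Proof.
move=> hc h; have hc' : 0 < - c by rewrite oppr_gt0.
have := o_opp (o_scale hc' h); by rewrite !scaleNr !opprK.
Qed.
Lemma o_le_scale (c : C) x y : 0 < c -> le x y -> le (c *: x) (c *: y).
Proof. by move=> hc [h|->]; [left; apply: o_scale|right]. Qed.
Lemma o_le_scaleN (c : C) x y : c < 0 -> le x y -> le (c *: y) (c *: x).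
Proof. by move=> hc [h|->]; [left; apply: o_scaleN|right]. Qed.
Lemma o_le_addr x y z : le x y -> le (x + z) (y + z).
Proof. by case=> [h|->]; [left; apply: o_addr|right]. Qed.
Lemma o_not_lt x y : ~ lt x y -> le y x.
Proof. move=> h; case: (o_total x y) => [//|[->|]]; [right|left] => //. Qed.
Lemma o_le_lt x y z : le x y -> lt y z -> lt x z.
Proof. by case=> [h|->] //; apply: o_trans. Qed.
Lemma o_lt_le x y z : lt x y -> le y z -> lt x z.
Proof. by move=> h [h'|<-] //; apply: o_trans h'. Qed.
Lemma o_le_trans x y z : le x y -> le y z -> le x z.
Proof. case=> [h|->] // h'; left; exact: o_lt_le h'. Qed.
Lemma o_le_sub0 x y : le x y <-> le 0 (y - x).
Proof.
split; case=> h.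
- by left; move/o_sub0: h.
- by right; rewrite h subrr.
- by left; apply/o_sub0.
- right; apply/eqP; rewrite eq_sym -subr_eq0; exact/eqP.
Qed.
End OVS.

Section OptOrd.
Variable T : Type.
Variable lt : T -> T -> Prop.
Hypothesis irr : forall x, ~ lt x x.
Hypothesis tr : forall x y z, lt x y -> lt y z -> lt x z.
Hypothesis tot : forall x y, lt x y \/ x = y \/ lt y x.

Lemma li_irr a : ~ ltinf lt a a. Proof. by case: a => //= x; apply: irr. Qed.
Lemma li_trans a c d : ltinf lt a c -> ltinf lt c d -> ltinf lt a d.
Proof. by case: a => [x|] //; case: c => [y|] //; case: d => [z|] //=; apply: tr. Qed.
Lemma li_le_lt a c d : leinf lt a c -> ltinf lt c d -> ltinf lt a d.
Proof. by case=> [h|->] //; apply: li_trans. Qed.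
Lemma li_lt_le a c d : ltinf lt a c -> leinf lt c d -> ltinf lt a d.
Proof. by move=> h [h'|<-] //; apply: li_trans h'. Qed.
Lemma li_le_trans a c d : leinf lt a c -> leinf lt c d -> leinf lt a d.
Proof. case=> [h|->] // h'; left; exact: li_lt_le h'. Qed.
Lemma li_total a c : ltinf lt a c \/ a = c \/ ltinf lt c a.
Proof.
case: a => [x|]; case: c => [y|] /=; try by [left|right;left|right;right].
by case: (tot x y) => [|[->|]]; [left|right;left|right;right].
Qed.
Lemma li_not_le a c : ~ leinf lt a c -> ltinf lt c a.
Proof. move=> h; case: (li_total a c) => [x|[x|//]]; case: h; [left|right] => //. Qed.
Lemma li_lt_not_le a c : ltinf lt a c -> ~ leinf lt c a.
Proof. move=> h h'; apply: (li_irr (li_lt_le h h')). Qed.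
Lemma li_antisym a c : leinf lt a c -> leinf lt c a -> a = c.
Proof. case=> [h|//] h'; by case: (li_lt_not_le h h'). Qed.
Lemma li_not_lt a c : ~ ltinf lt a c -> leinf lt c a.
Proof. move=> h; case: (li_total a c) => [x|[x|y]]; [by case: h|right|left] => //. Qed.
Lemma li_lt_some a c : ltinf lt a c -> a <> None.
Proof. by case: a. Qed.
End OptOrd.

Section HamelFacts.
Variable C : realFieldType.
Variable H : hamel C.
Local Notation V := (hcar H).
Local Notation lt0 := (@hlt0 C H).
Local Notation lt1 := (@hlt1 C H).
Local Notation v := (@hv C H).

Lemma l0_irr x : ~ lt0 x x. Proof. exact: (o_irr (hlt0_ovs H)). Qed.
Lemma l0_trans x y z : lt0 x y -> lt0 y z -> lt0 x z. Proof. exact: (o_trans (hlt0_ovs H)). Qed.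
Lemma l0_total x y : lt0 x y \/ x = y \/ lt0 y x. Proof. exact: (o_total (hlt0_ovs H)). Qed.

Lemma h_lt_irr a : ~ ltinf lt0 a a.
Proof. intros; eapply li_irr; eauto using l0_irr, l0_trans, l0_total. Qed.
Lemma h_lt_trans a c d : ltinf lt0 a c -> ltinf lt0 c d -> ltinf lt0 a d.
Proof. intros; eapply li_trans; eauto using l0_irr, l0_trans, l0_total. Qed.
Lemma h_le_lt a c d : leinf lt0 a c -> ltinf lt0 c d -> ltinf lt0 a d.
Proof. intros; eapply li_le_lt; eauto using l0_irr, l0_trans, l0_total. Qed.
Lemma h_lt_le a c d : ltinf lt0 a c -> leinf lt0 c d -> ltinf lt0 a d.
Proof. intros; eapply li_lt_le; eauto using l0_irr, l0_trans, l0_total. Qed.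
Lemma h_le_trans a c d : leinf lt0 a c -> leinf lt0 c d -> leinf lt0 a d.
Proof. intros; eapply li_le_trans; eauto using l0_irr, l0_trans, l0_total. Qed.
Lemma h_not_lt a c : ~ ltinf lt0 a c -> leinf lt0 c a.
Proof. intros; eapply li_not_lt; eauto using l0_irr, l0_trans, l0_total. Qed.
Lemma h_lt_not_le a c : ltinf lt0 a c -> ~ leinf lt0 c a.
Proof. intros; eapply li_lt_not_le; eauto using l0_irr, l0_trans, l0_total. Qed.
Lemma h_antisym a c : leinf lt0 a c -> leinf lt0 c a -> a = c.
Proof. intros; eapply li_antisym; eauto using l0_irr, l0_trans, l0_total. Qed.

Lemma hv_opp x : v (- x) = v x.
Proof. by rewrite -scaleN1r hv_scale // oppr_eq0 oner_eq0. Qed.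
Lemma hv_subC x y : v (x - y) = v (y - x).
Proof. by rewrite -opprB hv_opp. Qed.
Lemma hv_min x y a : leinf lt0 a (v x) -> leinf lt0 a (v y) -> leinf lt0 a (v (x + y)).
Proof.
move=> hx hy; case: (hv_add x y) => h.
exact: (li_le_trans l0_trans hx h). exact: (li_le_trans l0_trans hy h).
Qed.
Lemma hv_strict x y : ltinf lt0 (v x) (v y) -> v (x + y) = v x.
Proof.
move=> hxy.
have h1 : leinf lt0 (v x) (v (x + y)).
  case: (hv_add x y) => // h; left; exact: (li_lt_le l0_trans hxy h).
have h2 : leinf lt0 (v (x + y)) (v x).
  have e : x = (x + y) + - y by rewrite addrK.
  case: (hv_add (x + y) (- y)); rewrite -e // hv_opp => h.
  by case: (li_lt_not_le l0_irr l0_trans hxy h).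
exact: (li_antisym l0_irr l0_trans h2 h1).
Qed.
Lemma hv_sign x y : ltinf lt0 (v x) (v y) -> lt1 0 x -> lt1 0 (x + y).
Proof.
move=> hxy hx.
case: (o_total (hlt1_ovs H) 0 (x + y)) => [//|[e|hn]].
  have : y = - x by apply/eqP; rewrite -addr_eq0 addrC -e.
  by move=> ey; move: hxy; rewrite ey hv_opp => /(li_irr l0_irr).
have hxy' : lt1 x (- y).
  have := o_addr (hlt1_ovs H) (- y) hn; by rewrite addrK add0r.
have := hv_mono hx hxy'; rewrite hv_opp => h.
by case: (li_lt_not_le l0_irr l0_trans hxy h).
Qed.
Lemma hv_sign_iff x y : ltinf lt0 (v x) (v y) -> (lt1 0 x <-> lt1 0 (x + y)).
Proof.
move=> hxy; split; first exact: hv_sign.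
move=> h; have := @hv_sign (x + y) (- y); rewrite addrK; apply => //.
by rewrite hv_opp hv_strict.
Qed.
End HamelFacts.

Section Emb.
Variable C : realFieldType.
Variables H K : hamel C.
Variable f : hcar H -> hcar K.
Hypothesis hf : hamel_embedding f.
Lemma emb_lin a x y : f (a *: x + y) = a *: f x + f y. Proof. by case: hf. Qed.
Lemma emb_add x y : f (x + y) = f x + f y.
Proof. by have := emb_lin 1 x y; rewrite !scale1r. Qed.
Lemma emb0 : f 0 = 0.
Proof. by have := emb_lin (-1) 0 0; rewrite !scaleN1r !addNr. Qed.
Lemma emb_scale a x : f (a *: x) = a *: f x.
Proof. by have := emb_lin a x 0; rewrite !addr0 emb0 addr0. Qed.
Lemma emb_opp x : f (- x) = - f x.
Proof. by rewrite -scaleN1r emb_scale scaleN1r. Qed.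
Lemma emb_sub x y : f (x - y) = f x - f y.
Proof. by rewrite emb_add emb_opp. Qed.
Lemma emb_lt0 x y : hlt0 x y -> hlt0 (f x) (f y). Proof. by case: hf => _ _ h _ _; apply: h. Qed.
Lemma emb_lt1 x y : hlt1 x y -> hlt1 (f x) (f y). Proof. by case: hf => _ _ _ h _; apply: h. Qed.
Lemma emb_v x : omap f (hv x) = hv (f x). Proof. by case: hf => _ _ _ _ h; apply: h. Qed.
Lemma emb_ltinf a c : ltinf (@hlt0 C H) a c -> ltinf (@hlt0 C K) (omap f a) (omap f c).
Proof. by case: a => [x|] //; case: c => [y|] //=; apply: emb_lt0. Qed.
Lemma emb_leinf a c : leinf (@hlt0 C H) a c -> leinf (@hlt0 C K) (omap f a) (omap f c).
Proof. by case=> [h|->]; [left; apply: emb_ltinf|right]. Qed.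
End Emb.
Section Cone.
Variable C : realFieldType.
Variable V : lmodType C.
Variable pos : V -> Prop.
Hypothesis p0 : ~ pos 0.
Hypothesis ptot : forall x, pos x \/ x = 0 \/ pos (- x).
Hypothesis padd : forall x y, pos x -> pos y -> pos (x + y).
Hypothesis pscale : forall (c : C) x, 0 < c -> pos x -> pos (c *: x).
Lemma cone_ovs : ordered_vs_order (fun x y => pos (y - x)).
Proof.
split.
- by move=> x; rewrite subrr.
- move=> x y z h1 h2; have := padd h2 h1; by rewrite addrA subrK.
- move=> x y; case: (ptot (y - x)) => [h|[h|h]]; [left => //|right; left|right; right].
  + by apply/eqP; rewrite eq_sym -subr_eq0; apply/eqP.
  + by rewrite opprB in h.
- by move=> x y z h; rewrite opprD addrACA subrr addr0.
- by move=> c x hc h; rewrite subr0; rewrite subr0 in h; apply: pscale.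
Qed.
End Cone.
Section Main.
Variable C : realFieldType.
Variable G : hamel C.
Variable P : hcar G -> Prop.
Hypothesis hP : forall x y, hlt0 y x -> P x -> P y.
Variable I : Type.
Variable ltI : I -> I -> Prop.
Hypothesis hI : well_indexed ltI.
Variable b : I -> hcar G.
Hypothesis hpc : pc_seq ltI b.
Hypothesis hdiv : divergent ltI b.

Local Notation V := (hcar G).
Local Notation lt0 := (@hlt0 C G).
Local Notation lt1 := (@hlt1 C G).
Local Notation v := (@hv C G).

Lemma I_trans r s t : ltI r s -> ltI s t -> ltI r t.
Proof. by case: hI => _ [h _]; apply: h. Qed.
Lemma I_tot r s : ltI r s \/ r = s \/ ltI s r.
Proof. by case: hI => _ [_ [h _]]; apply: h. Qed.
Lemma I_succ r : exists s, ltI r s.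
Proof. by case: hI => _ [_ [_ [_ [_ h]]]]. Qed.
Lemma I_inh : inhabited I.
Proof. by case: hI => _ [_ [_ [_ [h _]]]]. Qed.
Lemma I_up2 r1 r2 : exists t, ltI r1 t /\ ltI r2 t.
Proof.
case: (I_tot r1 r2) => [h|[<-|h]].
- case: (I_succ r2) => t ht; exists t; split => //; exact: I_trans h ht.
- by case: (I_succ r1) => t ht; exists t.
- case: (I_succ r1) => t ht; exists t; split => //; exact: I_trans h ht.
Qed.
Lemma I_up3 r1 r2 r3 : exists t, [/\ ltI r1 t, ltI r2 t & ltI r3 t].
Proof.
case: (I_up2 r1 r2) => s [h1 h2]; case: (I_up2 s r3) => t [h3 h4].
exists t; split => //; exact: I_trans h3.
Qed.
Lemma I_up4 r1 r2 r3 r4 : exists t, [/\ ltI r1 t, ltI r2 t, ltI r3 t & ltI r4 t].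
Proof.
case: (I_up3 r1 r2 r3) => s [h1 h2 h3]; case: (I_up2 s r4) => t [h5 h4].
exists t; split => //; exact: I_trans h5.
Qed.

Lemma pc_const r0 : (forall t s r, ltI r0 r -> ltI r s -> ltI s t ->
    ltinf lt0 (v (b s - b r)) (v (b t - b s))) ->
  forall r s t, ltI r0 r -> ltI r s -> ltI r t -> v (b s - b r) = v (b t - b r).
Proof.
move=> hr0 r s t h0 hs ht.
have e : forall s t, ltI s t -> b t - b r = (b s - b r) + (b t - b s).
  by move=> s' t' _; rewrite [RHS]addrC [RHS]addrA subrK.
case: (I_tot s t) => [st|[<-//|ts]].
- by rewrite (e s t st) [RHS]hv_strict //; exact: (hr0 t s r h0 hs st).
- by rewrite (e t s ts) [LHS]hv_strict //; exact: (hr0 s t r h0 ht ts).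
Qed.

Lemma key_div a : exists r0, (forall t s r, ltI r0 r -> ltI r s -> ltI s t ->
    ltinf lt0 (v (b s - b r)) (v (b t - b s))) /\
  exists rho s, [/\ ltI r0 rho, ltI rho s & ltinf lt0 (v (a - b rho)) (v (b s - b rho))].
Proof.
case: hpc => r0 hr0; exists r0; split => //.
apply: NNPP => N; apply: (hdiv (a := a)); exists r0 => r s hr hrs.
case: (I_succ s) => t hst.
have h1 := hr0 t s r hr hrs hst.
have hs : ltI r0 s by exact: I_trans hrs.
have h2 : leinf lt0 (v (b t - b s)) (v (a - b s)).
  apply: h_not_lt => h.
  by apply: N; exists s, t.
have h3 := h_lt_le h1 h2.
have -> : a - b r = (b s - b r) + (a - b s) by rewrite [RHS]addrC [RHS]addrA subrK.
by rewrite hv_strict.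
Qed.

Definition W : lmodType C := (V * C^o)%type.
Definition phi (r : I) (x : W) : V := x.1 + x.2 *: b r.

Lemma phi_lin r a x y : phi r (a *: x + y) = a *: phi r x + phi r y.
Proof.
rewrite /phi /=. rewrite scalerDl -scalerA scalerDr addrACA //.
Qed.
Lemma phi_add r x y : phi r (x + y) = phi r x + phi r y.
Proof. by have := phi_lin r 1 x y; rewrite !scale1r. Qed.
Lemma phi_scale r a x : phi r (a *: x) = a *: phi r x.
Proof. by rewrite /phi /= scalerDr scalerA. Qed.
Lemma phi0 r : phi r 0 = 0.
Proof. by rewrite /phi /= scale0r addr0. Qed.
Lemma phi_opp r x : phi r (- x) = - phi r x.
Proof. by rewrite -scaleN1r phi_scale scaleN1r. Qed.
Lemma phi_sub r x y : phi r (x - y) = phi r x - phi r y.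
Proof. by rewrite phi_add phi_opp. Qed.
Lemma phi_pair0 r (x : W) : x.2 = 0 -> phi r x = x.1.
Proof. by move=> e; rewrite /phi e scale0r addr0. Qed.

Lemma Key (x : W) : x <> 0 -> exists r, forall t, ltI r t ->
  ltinf lt0 (v (phi r x)) (v (phi t x - phi r x)).
Proof.
case: x => g l /= hx.
have [el|hl] := eqVneq l 0.
  subst l; case: I_inh => r; exists r => t _.
  rewrite /phi /= !scale0r !addr0 subrr.
  have e0 : v 0 = None by apply/hv_inf.
  have : v g <> None by move/hv_inf => eg; apply: hx; rewrite eg.
  by rewrite e0; case: (v g).
set a := - (l^-1 *: g).
case: (key_div a) => r0 [hr0 [rho [s [h0 hs hlt]]]].
exists rho => t ht.
have ephi : forall r, phi r (g, l) = (- l) *: (a - b r).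
  move=> r; rewrite /phi /a /= scalerBr scaleNr scalerN opprK scalerA mulrV ?unitfE //.
  by rewrite scale1r scaleNr opprK.
have ed : phi t (g, l) - phi rho (g, l) = l *: (b t - b rho).
  by rewrite /phi /= opprD addrACA subrr add0r scalerBr.
rewrite ed ephi !hv_scale ?oppr_eq0 // (pc_const hr0 h0 ht hs).
exact: hlt.
Qed.

Definition E (x : W) (r : I) : Prop :=
  x = 0 \/ forall t, ltI r t -> ltinf lt0 (v (phi r x)) (v (phi t x - phi r x)).
Lemma E_ex x : exists r, E x r.
Proof.
case: (classic (x = 0)) => [->|hx].
  by case: I_inh => r; exists r; left.
by case: (Key hx) => r hr; exists r; right.
Qed.
Definition rr (x : W) : I := proj1_sig (constructive_indefinite_description _ (E_ex x)).
Lemma rrP x : E x (rr x).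
Proof. rewrite /rr; case: constructive_indefinite_description => //. Qed.
Definition vv (x : W) : option V := v (phi (rr x) x).
Definition inj (g : V) : W := (g, 0).
Definition vW (x : W) : option W := omap inj (vv x).
Definition pos1 (x : W) : Prop := lt1 0 (phi (rr x) x).

Lemma ev_v x t : ltI (rr x) t -> v (phi t x) = vv x.
Proof.
move=> ht; rewrite /vv; case: (rrP x) => [->|h]; first by rewrite !phi0.
have := h t ht => h'.
have -> : phi t x = phi (rr x) x + (phi t x - phi (rr x) x) by rewrite addrC subrK.
by rewrite hv_strict.
Qed.
Lemma ev_pos1 x t : ltI (rr x) t -> (lt1 0 (phi t x) <-> pos1 x).
Proof.
move=> ht; rewrite /pos1; case: (rrP x) => [->|h]; first by rewrite !phi0.
have := h t ht => h'.
have -> : phi t x = phi (rr x) x + (phi t x - phi (rr x) x) by rewrite addrC subrK.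
by split; move/(hv_sign_iff h').
Qed.
Lemma vv_none x : vv x = None <-> x = 0.
Proof.
rewrite /vv; case: (rrP x) => [->|h]; first by rewrite phi0; split => // _; apply/hv_inf.
split => [e|ex]; last by rewrite ex phi0; apply/hv_inf.
by move: h; case: (I_succ (rr x)) => t ht /(_ t ht); rewrite e.
Qed.

Definition pos0 (x : W) : Prop :=
  (x.2 = 0 /\ lt0 0 x.1) \/
  (0 < x.2 /\ exists p, P p /\ le lt0 0 (x.2 *: p + x.1)) \/
  (x.2 < 0 /\ exists q, ~ P q /\ le lt0 0 (x.2 *: q + x.1)).

Lemma scale_inv_eq (l : C) (g : V) : l != 0 -> l *: (- (l^-1 *: g)) + g = 0.
Proof. by move=> hl; rewrite scalerN scalerA mulfV // scale1r addNr. Qed.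

Local Notation O0 := (hlt0_ovs G).
Local Notation O1 := (hlt1_ovs G).

Lemma P_le x y : le lt0 y x -> P x -> P y.
Proof. by case=> [h|->] //; apply: hP. Qed.

Lemma pos0_0 : ~ pos0 0.
Proof.
case=> [[_ h]|[[h _]|[h _]]]; first exact: (o_irr O0 h).
all: by move: h; rewrite /= ltxx.
Qed.

Lemma pos0_tot x : pos0 x \/ x = 0 \/ pos0 (- x).
Proof.
case: x => g l.
have [hl|hl|el] := ltrgtP l 0; last first.
- subst l; case: (o_total O0 0 g) => [h|[<-|h]].
  + by left; left.
  + by right; left.
  + right; right; left; split; first by rewrite /= oppr0.
    exact: (o_opp0' O0 h).
- set a := - (l^-1 *: g).
  have ea : l *: a + g = 0.
    exact: (scale_inv_eq g (lt0r_neq0 hl)).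
  case: (classic (P a)) => pa.
  + left; right; left; split => //; exists a; split => //; right; rewrite /= ea //.
  + right; right; right; right; split; first by rewrite /= oppr_lt0.
    exists a; split => //; right; rewrite /= scaleNr -opprD ea oppr0 //.
- set a := - (l^-1 *: g).
  have ea : l *: a + g = 0.
    exact: (scale_inv_eq g (ltr0_neq0 hl)).
  case: (classic (P a)) => pa.
  + right; right; right; left; split; first by rewrite /= oppr_gt0.
    exists a; split => //; right; rewrite /= scaleNr -opprD ea oppr0 //.
  + left; right; right; split => //; exists a; split => //; right; rewrite /= ea //.
Qed.

Lemma mono_pos (l : C) (g p p' : V) : 0 < l -> le lt0 p p' ->
  le lt0 0 (l *: p + g) -> le lt0 0 (l *: p' + g).
Proof.
move=> hl hp h; apply: (o_le_trans O0 h); apply: (o_le_addr O0).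
exact: (o_le_scale O0 hl hp).
Qed.
Lemma mono_neg (l : C) (g p p' : V) : l < 0 -> le lt0 p' p ->
  le lt0 0 (l *: p + g) -> le lt0 0 (l *: p' + g).
Proof.
move=> hl hp h; apply: (o_le_trans O0 h); apply: (o_le_addr O0).
exact: (o_le_scaleN O0 hl hp).
Qed.

Lemma eq_split (l m : C) (p g g' : V) :
  (l + m) *: p + (g + g') = (l *: p + g) + (m *: p + g').
Proof. by rewrite scalerDl addrACA. Qed.

Lemma add_A (g g' p : V) (m : C) : lt0 0 g -> le lt0 0 (m *: p + g') ->
  le lt0 0 (m *: p + (g + g')).
Proof.
move=> hg h; rewrite addrCA; apply: (o_le_add0 O0) => //; by left.
Qed.

Lemma add_BB (l m : C) (g g' p p' : V) : 0 < l -> 0 < m -> le lt0 p p' ->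
  le lt0 0 (l *: p + g) -> le lt0 0 (m *: p' + g') ->
  le lt0 0 ((l + m) *: p' + (g + g')).
Proof.
move=> hl hm hp h1 h2; rewrite eq_split; apply: (o_le_add0 O0) => //.
exact: mono_pos h1.
Qed.
Lemma add_CC (l m : C) (g g' p p' : V) : l < 0 -> m < 0 -> le lt0 p' p ->
  le lt0 0 (l *: p + g) -> le lt0 0 (m *: p' + g') ->
  le lt0 0 ((l + m) *: p' + (g + g')).
Proof.
move=> hl hm hp h1 h2; rewrite eq_split; apply: (o_le_add0 O0) => //.
exact: mono_neg h1.
Qed.

Lemma id1 (a d c e : V) : a + d = (c + a) + (- e + d) + (e - c).
Proof. by rewrite (addrACA c a (- e) d) (addrAC (c - e) (a + d) (e - c)) (addrA (c - e) e (- c)) subrK subrr add0r. Qed.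

Lemma add_BC (l m : C) (g g' p q : V) : 0 < l -> m < 0 -> P p -> ~ P q -> lt0 p q ->
  le lt0 0 (l *: p + g) -> le lt0 0 (m *: q + g') ->
  pos0 ((g, l) + (g', m) : W).
Proof.
move=> hl hm pp pq hpq h1 h2; rewrite /pos0 /=.
have hpq' : le lt0 p q by left.
have [hn|hn|en] := ltrgtP (l + m) 0.
- right; right; split => //; exists q; split => //.
  rewrite eq_split; apply: (o_le_add0 O0) => //; exact: mono_pos h1.
- right; left; split => //; exists p; split => //.
  rewrite eq_split; apply: (o_le_add0 O0) => //; exact: mono_neg h2.
- left; split => //.
  have em : m = - l by apply/eqP; rewrite -addr_eq0 addrC en.
  have -> : g + g' = (l *: p + g) + (m *: q + g') + l *: (q - p).
    rewrite em scalerBr scaleNr; exact: id1.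
  apply: (o_le_lt0 O0); first exact: (o_le_add0 O0 h1 h2).
  apply: (o_scale0 O0) => //; by move/(o_sub0 O0): hpq.
Qed.

Lemma lt_PnP p q : P p -> ~ P q -> lt0 p q.
Proof.
move=> pp pq; case: (o_total O0 p q) => [//|[e|h]].
- by subst q.
- by case: pq; apply: hP h pp.
Qed.

Lemma pos0_add x y : pos0 x -> pos0 y -> pos0 (x + y).
Proof.
case: x => g l; case: y => g' m.
case=> [[el hg]|[[hl [p [pp hp]]]|[hl [q [pq hq]]]]];
case=> [[em hg']|[[hm [p' [pp' hp']]]|[hm [q' [pq' hq']]]]]; simpl in *.
all: have sw : pos0 ((g', m) + (g, l) : W) -> pos0 ((g,l) + (g',m) : W) by rewrite addrC.
all: try subst l; try subst m.
- left; split => /=; first by rewrite addr0.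
  exact: (o_add0 O0).
- right; left; split => /=; first by rewrite add0r.
  exists p'; split => //; rewrite add0r; exact: add_A.
- right; right; split => /=; first by rewrite add0r.
  exists q'; split => //; rewrite add0r; exact: add_A.
- apply: sw; right; left; split => /=; first by rewrite add0r.
  exists p; split => //; rewrite add0r; exact: add_A.
- case: (o_total O0 p p') => [h|[e|h]].
  + right; left; split => /=; first exact: addr_gt0.
    exists p'; split => //; apply: add_BB hl hm _ hp hp'; by left.
  + subst p'; right; left; split => /=; first exact: addr_gt0.
    exists p; split => //; apply: add_BB hl hm _ hp hp'; by right.
  + apply: sw; right; left; split => /=; first exact: addr_gt0.
    exists p; split => //; apply: add_BB hm hl _ hp' hp; by left.
- exact: (add_BC hl hm pp pq' (lt_PnP pp pq') hp hq').
- apply: sw; right; right; split => /=; first by rewrite add0r.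
  exists q; split => //; rewrite add0r; exact: add_A.
- apply: sw; exact: (add_BC hm hl pp' pq (lt_PnP pp' pq) hp' hq).
- have hlm : l + m < 0 by rewrite -oppr_gt0 opprD addr_gt0 // oppr_gt0.
  have hml : m + l < 0 by rewrite addrC.
  case: (o_total O0 q q') => [h|[e|h]].
  + apply: sw; right; right; split => //=.
    exists q; split => //; apply: add_CC hm hl _ hq' hq; by left.
  + subst q'; right; right; split => //=.
    exists q; split => //; apply: add_CC hl hm _ hq hq'; by right.
  + right; right; split => //=.
    exists q'; split => //; apply: add_CC hl hm _ hq hq'; by left.
Qed.

Lemma pos0_scale (c : C) x : 0 < c -> pos0 x -> pos0 (c *: x).
Proof.
case: x => g l hc.
case=> [[el hg]|[[hl [p [pp hp]]]|[hl [q [pq hq]]]]]; simpl in *.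
- left; split => /=; first by rewrite el scaler0.
  exact: (o_scale0 O0).
- right; left; split => /=; first exact: mulr_gt0.
  exists p; split => //; rewrite -scalerA -scalerDr.
  have := o_le_scale O0 hc hp; by rewrite scaler0.
- right; right; split => /=; first by rewrite pmulr_rlt0.
  exists q; split => //; rewrite -scalerA -scalerDr.
  have := o_le_scale O0 hc hq; by rewrite scaler0.
Qed.

Definition ltW0 (x y : W) := pos0 (y - x).
Definition ltW1 (x y : W) := pos1 (y - x).

Lemma ovsW0 : ordered_vs_order ltW0.
Proof. apply: cone_ovs; [exact: pos0_0|exact: pos0_tot|exact: pos0_add|exact: pos0_scale]. Qed.

Lemma pos1_0 : ~ pos1 0.
Proof. by rewrite /pos1 phi0; apply: (o_irr O1). Qed.

Lemma phi_nz x t : x <> 0 -> ltI (rr x) t -> phi t x <> 0.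
Proof.
move=> hx ht e; apply: hx; apply/vv_none; rewrite -(ev_v ht) e; exact/hv_inf.
Qed.

Lemma pos1_tot x : pos1 x \/ x = 0 \/ pos1 (- x).
Proof.
case: (classic (x = 0)) => [->|hx]; first by right; left.
case: (I_up2 (rr x) (rr (- x))) => t [h1 h2].
case: (o_total O1 0 (phi t x)) => [h|[e|h]].
- by left; apply/(ev_pos1 h1).
- by case: (phi_nz hx h1).
- right; right; apply/(ev_pos1 h2); rewrite phi_opp; exact: (o_opp0' O1).
Qed.

Lemma pos1_add x y : pos1 x -> pos1 y -> pos1 (x + y).
Proof.
case: (I_up3 (rr x) (rr y) (rr (x + y))) => t [h1 h2 h3].
move=> /(ev_pos1 h1) hx /(ev_pos1 h2) hy; apply/(ev_pos1 h3).
rewrite phi_add; exact: (o_add0 O1).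
Qed.

Lemma pos1_scale (c : C) x : 0 < c -> pos1 x -> pos1 (c *: x).
Proof.
case: (I_up2 (rr x) (rr (c *: x))) => t [h1 h2] hc.
move=> /(ev_pos1 h1) hx; apply/(ev_pos1 h2).
rewrite phi_scale; exact: (o_scale0 O1).
Qed.

Lemma ovsW1 : ordered_vs_order ltW1.
Proof. apply: cone_ovs; [exact: pos1_0|exact: pos1_tot|exact: pos1_add|exact: pos1_scale]. Qed.

Lemma inj_lt a c : lt0 a c -> ltW0 (inj a) (inj c).
Proof.
move=> h; left; split => /=; first by rewrite subrr.
by move/(o_sub0 O0): h.
Qed.
Lemma inj_ltinf a c : ltinf lt0 a c -> ltinf ltW0 (omap inj a) (omap inj c).
Proof. by case: a => [x|] //; case: c => [y|] //=; apply: inj_lt. Qed.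
Lemma inj_leinf a c : leinf lt0 a c -> leinf ltW0 (omap inj a) (omap inj c).
Proof. by case=> [h|->]; [left; apply: inj_ltinf|right]. Qed.

Lemma vW_none x : vW x = None <-> x = 0.
Proof. rewrite /vW -vv_none; by case: (vv x). Qed.

Lemma vW_add x y : leinf ltW0 (vW x) (vW (x + y)) \/ leinf ltW0 (vW y) (vW (x + y)).
Proof.
case: (I_up3 (rr x) (rr y) (rr (x + y))) => t [h1 h2 h3].
rewrite /vW -(ev_v h1) -(ev_v h2) -(ev_v h3) phi_add.
by case: (hv_add (phi t x) (phi t y)) => h; [left|right]; apply: inj_leinf.
Qed.

Lemma vW_scale (l : C) x : l != 0 -> vW (l *: x) = vW x.
Proof.
case: (I_up2 (rr x) (rr (l *: x))) => t [h1 h2] hl.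
by rewrite /vW -(ev_v h1) -(ev_v h2) phi_scale hv_scale.
Qed.

Lemma vW_mono x y : ltW1 0 x -> ltW1 x y -> leinf ltW0 (vW y) (vW x).
Proof.
rewrite /ltW1 subr0.
case: (I_up3 (rr x) (rr y) (rr (y - x))) => t [h1 h2 h3].
move=> /(ev_pos1 h1) hx /(ev_pos1 h3) hxy.
rewrite /vW -(ev_v h1) -(ev_v h2); apply: inj_leinf; apply: hv_mono hx _.
by apply/(o_sub0 O1); rewrite -phi_sub.
Qed.

Lemma vv_inj g : vv (inj g) = v g.
Proof.
case: (I_succ (rr (inj g))) => t ht; by rewrite -(ev_v ht) phi_pair0.
Qed.

Lemma vW_idem x : vinf vW (vW x) = vW x.
Proof.
rewrite /vW; case e: (vv x) => [c|] //=.
rewrite vv_inj; case: (I_succ (rr x)) => t ht.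
by have := hv_idem (phi t x); rewrite (ev_v ht) e /= => ->.
Qed.

Lemma vW_pos x : ltinf ltW1 (Some 0) (vW x).
Proof.
rewrite /vW; case e: (vv x) => [c|] //=.
rewrite /ltW1 subr0; case: (I_up2 (rr x) (rr (inj c))) => t [h1 h2].
apply/(ev_pos1 h2); rewrite phi_pair0 //=.
have := hv_pos (phi t x); by rewrite (ev_v h1) e.
Qed.

Definition GW : hamel C := @Hamel C W ltW0 ltW1 vW ovsW0 ovsW1 vW_none vW_add vW_scale vW_mono vW_idem vW_pos.

Definition h0 : W := (0, 1).

Lemma j_emb : hamel_embedding (H := G) (K := GW) inj.
Proof.
split.
- move=> a x y; rewrite /inj; apply: injective_projections => //=.
  by rewrite scaler0 addr0.
- by move=> x y [].
- exact: inj_lt.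
- move=> x y hxy; rewrite /= /ltW1.
  case: (I_succ (rr (inj y - inj x))) => t ht; apply/(ev_pos1 ht).
  rewrite phi_pair0 /=; first by move/(o_sub0 O1): hxy.
  by rewrite subrr.
- by move=> x; rewrite /= /vW vv_inj.
Qed.

Lemma phi_h t g : phi t (h0 - inj g) = b t - g.
Proof. by rewrite /phi /= subr0 scale1r sub0r addrC. Qed.

Lemma j_pl : pseudolim (H := GW) ltI (fun r => inj (b r)) h0.
Proof.
case: hpc => r0 hr0; exists r0 => r s hr hrs /=.
case: (I_up3 (rr (h0 - inj (b r))) (rr (h0 - inj (b s))) s) => t [h1 h2 h3].
rewrite /vW -(ev_v h1) -(ev_v h2) !phi_h; apply: inj_ltinf.
rewrite -(pc_const hr0 hr hrs (I_trans hrs h3)).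
exact: hr0.
Qed.

Lemma j_cut1 x : P x -> ltW0 (inj x) h0.
Proof.
move=> px; right; left; split => /=; first by rewrite subr0 ltr01.
exists x; split => //; right; by rewrite /= subr0 scale1r sub0r subrr.
Qed.

Lemma j_cut2 x : ~ P x -> ltW0 h0 (inj x).
Proof.
move=> px; right; right; split => /=; first by rewrite sub0r oppr_lt0 ltr01.
exists x; split => //; right; by rewrite /= sub0r scaleN1r subr0 addNr.
Qed.

Section Univ.
Variable Gs : hamel C.
Variable i : V -> hcar Gs.
Variable hs : hcar Gs.
Hypothesis hi : hamel_embedding i.
Hypothesis hpl : pseudolim ltI (fun r => i (b r)) hs.
Hypothesis hc1 : forall x, P x -> hlt0 (i x) hs.
Hypothesis hc2 : forall x, ~ P x -> hlt0 hs (i x).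

Local Notation vs := (@hv C Gs).
Local Notation lts0 := (@hlt0 C Gs).
Local Notation lts1 := (@hlt1 C Gs).
Local Notation S0 := (hlt0_ovs Gs).
Local Notation S1 := (hlt1_ovs Gs).

Definition k (z : W) : hcar Gs := i z.1 + z.2 *: hs.

Lemma k_lin a x y : k (a *: x + y) = a *: k x + k y.
Proof. by rewrite /k /= (emb_lin hi) scalerDl scalerDr scalerA addrACA. Qed.
Lemma k_add x y : k (x + y) = k x + k y.
Proof. by have := k_lin 1 x y; rewrite !scale1r. Qed.
Lemma k_opp x : k (- x) = - k x.
Proof. by rewrite /k /= (emb_opp hi) scaleNr opprD. Qed.
Lemma k_sub x y : k (x - y) = k x - k y.
Proof. by rewrite k_add k_opp. Qed.
Lemma k_inj c : k (inj c) = i c.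
Proof. by rewrite /k /inj /= scale0r addr0. Qed.

Lemma id2 (a c d : hcar Gs) : a + d = (a + c) + (d - c).
Proof. by rewrite (addrACA a c d (- c)) subrr addr0. Qed.
Lemma id3 (h a c : hcar Gs) : c - a = (h - a) + - (h - c).
Proof. by rewrite opprB (addrC (h - a)) addrA subrK. Qed.

Lemma k_dec z t : k z = i (phi t z) + z.2 *: (hs - i (b t)).
Proof.
rewrite /k /phi (emb_add hi) (emb_scale hi) scalerBr; exact: id2.
Qed.

Lemma U z : z.2 != 0 -> exists T, forall t, ltI T t ->
  ltinf lts0 (omap i (vv z)) (vs (hs - i (b t))).
Proof.
move=> hz; case: hpl => s0 hs0.
case: (I_up2 (rr z) s0) => T0 [h1 h2]; case: (I_succ T0) => T hT.
have A : forall s, ltI T0 s -> leinf lts0 (omap i (vv z)) (vs (hs - i (b s))).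
  move=> s hTs; case: (I_succ s) => t hst.
  have -> : vs (hs - i (b s)) = vs (i (b t - b s)).
    rewrite (emb_sub hi) (id3 hs (i (b s)) (i (b t))) [RHS]hv_strict // hv_opp.
    exact: hs0 s t (I_trans h2 hTs) hst.
  rewrite -(emb_v hi); apply: (emb_leinf hi).
  rewrite -(hv_scale _ hz).
  have -> : z.2 *: (b t - b s) = phi t z + - phi s z.
    by rewrite /phi opprD addrACA subrr add0r scalerBr.
  have hzs : ltI (rr z) s by exact: I_trans h1 hTs.
  have hzt : ltI (rr z) t by exact: I_trans hzs hst.
  apply: hv_min; first by rewrite (ev_v hzt); right.
  by rewrite hv_opp (ev_v hzs); right.
exists T => t ht.
apply: h_le_lt (A T hT) _.
exact: hs0 T t (I_trans h2 hT) ht.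
Qed.

Lemma k_pos0 z : pos0 z -> lts0 0 (k z).
Proof.
case: z => g l; case=> [[el hg]|[[hl [p [pp hp]]]|[hl [q [pq hq]]]]]; simpl in *.
- subst l; rewrite /k /= scale0r addr0 -(emb0 hi); exact: (emb_lt0 hi).
- have h1 := o_scale S0 hl (hc1 pp).
  have h2 := o_addl S0 (i g) h1.
  have h3 : le lts0 0 (i (l *: p + g)).
    case: hp => [h|<-]; [left; rewrite -(emb0 hi); exact: (emb_lt0 hi)|right; by rewrite (emb0 hi)].
  rewrite (emb_add hi) (emb_scale hi) addrC in h3.
  exact: (o_le_lt S0 h3 h2).
- have h1 := o_scaleN S0 hl (hc2 pq).
  have h2 := o_addl S0 (i g) h1.
  have h3 : le lts0 0 (i (l *: q + g)).
    case: hq => [h|<-]; [left; rewrite -(emb0 hi); exact: (emb_lt0 hi)|right; by rewrite (emb0 hi)].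
  rewrite (emb_add hi) (emb_scale hi) addrC in h3.
  exact: (o_le_lt S0 h3 h2).
Qed.

Lemma k_pos1 z : pos1 z -> lts1 0 (k z).
Proof.
have [el|hz] := eqVneq z.2 0.
  case: (I_succ (rr z)) => t ht /(ev_pos1 ht).
  rewrite phi_pair0 // /k el scale0r addr0 -(emb0 hi); exact: (emb_lt1 hi).
case: (U hz) => T hT.
case: (I_up2 T (rr z)) => t [h1 h2] /(ev_pos1 h2) hp.
rewrite (k_dec z t); apply: hv_sign.
  rewrite hv_scale // -(emb_v hi) (ev_v h2); exact: hT.
rewrite -(emb0 hi); exact: (emb_lt1 hi).
Qed.

Lemma k_v z : omap k (vW z) = vs (k z).
Proof.
have -> : omap k (vW z) = omap i (vv z) by rewrite /vW; case: (vv z) => //= c; rewrite k_inj.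
have [el|hz] := eqVneq z.2 0.
  case: (I_succ (rr z)) => t ht.
  rewrite -(ev_v ht) phi_pair0 // (emb_v hi) /k el scale0r addr0 //.
case: (U hz) => T hT.
case: (I_up2 T (rr z)) => t [h1 h2].
rewrite (k_dec z t) hv_strict; first by rewrite -(emb_v hi) (ev_v h2).
rewrite hv_scale // -(emb_v hi) (ev_v h2); exact: hT.
Qed.

Lemma k_emb : hamel_embedding (H := GW) (K := Gs) k.
Proof.
have hlt : forall x y, ltW0 x y -> lts0 (k x) (k y).
  move=> x y /k_pos0; rewrite k_sub => h; exact/(o_sub0 S0).
split.
- exact: k_lin.
- move=> x y e; case: (o_total ovsW0 x y) => [h|[//|h]].
  + by have := hlt _ _ h; rewrite e => /(o_irr S0).
  + by have := hlt _ _ h; rewrite e => /(o_irr S0).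
- exact: hlt.
- move=> x y /k_pos1; rewrite k_sub => h; exact/(o_sub0 S1).
- exact: k_v.
Qed.

End Univ.
End Main.

Theorem lemma4p6 (C : realFieldType) (G : hamel C)
  (P : hcar G -> Prop)
  (hP : forall x y, hlt0 y x -> P x -> P y)
  (I : Type) (ltI : I -> I -> Prop) (hI : well_indexed ltI)
  (b : I -> hcar G) (hpc : pc_seq ltI b) (hdiv : divergent ltI b) :
  exists (G' : hamel C) (j : hcar G -> hcar G') (h : hcar G'),
    [/\ hamel_embedding j,
        pseudolim ltI (fun r => j (b r)) h,
        (forall x, P x -> hlt0 (j x) h),
        (forall x, ~ P x -> hlt0 h (j x)) &
        (forall (Gs : hamel C) (i : hcar G -> hcar Gs) (hs : hcar Gs),
          hamel_embedding i ->
          pseudolim ltI (fun r => i (b r)) hs ->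
          (forall x, P x -> hlt0 (i x) hs) ->
          (forall x, ~ P x -> hlt0 hs (i x)) ->
          exists k : hcar G' -> hcar Gs,
            [/\ hamel_embedding k, (forall x, k (j x) = i x) & k h = hs])].
Proof.
exists (GW hP hI hpc hdiv), (@inj C G), (h0 G).
split.
- exact: j_emb.
- exact: j_pl.
- exact: j_cut1.
- exact: j_cut2.
- move=> Gs i hs hi hpl hc1 hc2.
  exists (k i hs); split.
  + exact: k_emb.
  + by move=> x; rewrite k_inj.
  + by rewrite /k /h0 /= (emb0 hi) scale1r add0r.
Qed.
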